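(* Let $\Gamma$ be a finite simple graph and suppose $\psi\colon A(P_3^c)\to A(\Gamma)$ is an injective homomorphism. Then there is a full embedding $\iota\colon P_3^c\to\Gamma$ with $\iota(V(P_3^c))\subset\mathrm{supp}(\psi)$.
   Context: $A(\Gamma) = \langle V(\Gamma) \mid uv=vu \text{ whenever } \{u,v\}\in E(\Gamma)\rangle$ is the right-angled Artin group. $P_3$ is the path graph with vertices $v_1,v_2,v_3$ and edges $\{v_1,v_2\},\{v_2,v_3\}$; its complement $P_3^c$ has the single edge $\{v_1,v_3\}$ plus the isolated vertex $v_2$ (so $A(P_3^c)\cong\mathbb{Z}*\mathbb{Z}^2$). A graph embedding is an injective vertex map preserving adjacency; it is full if it also preserves non-adjacency. The support $\mathrm{supp}(g)$ of $g\in A(\Gamma)$ is the set of vertices $v$ such that $v$ or $v^{-1}$ occurs in a (equivalently, any) shortest word representing $g$; for a homomorphism $\psi\colon A(\Lambda)\to A(\Gamma)$, $\mathrm{supp}(\psi)=\bigcup_{v\in V(\Lambda)}\mathrm{supp}(\psi(v))$. *)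

(* Defs.v *)
From Stdlib Require Import Relations.
From mathcomp Require Import all_boot.
Set Implicit Arguments. Unset Strict Implicit. Unset Printing Implicit Defensive.

(* Words in the generators of A(Gamma): a letter (v, true) is v, (v, false) is v^-1. *)
Definition raag_word (T : Type) := seq (T * bool).

Definition inv_word (T : Type) (w : raag_word T) : raag_word T :=
  rev (map (fun l => (l.1, ~~ l.2)) w).

Inductive raag_step (T : Type) (e : rel T) : raag_word T -> raag_word T -> Prop :=
| raag_cancel (u v : raag_word T) (x : T) (b : bool) :
    raag_step e (u ++ [:: (x, b); (x, ~~ b)] ++ v) (u ++ v)
| raag_comm (u v : raag_word T) (x y : T) (b c : bool) :
    e x y -> raag_step e (u ++ [:: (x, b); (y, c)] ++ v) (u ++ [:: (y, c); (x, b)] ++ v).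

Definition raag_eq (T : Type) (e : rel T) : relation (raag_word T) :=
  clos_refl_sym_trans _ (raag_step e).

(* A homomorphism A(Lambda) -> A(Gamma) is given by the images f v of generators,
   subject to: images of adjacent generators commute. *)
Definition is_raag_hom (L G : Type) (eL : rel L) (eG : rel G)
  (f : L -> raag_word G) : Prop :=
  forall u v, eL u v -> raag_eq eG (f u ++ f v) (f v ++ f u).

Definition hom_ext (L G : Type) (f : L -> raag_word G) (w : raag_word L) : raag_word G :=
  flatten (map (fun l => if l.2 then f l.1 else inv_word (f l.1)) w).

Definition raag_hom_injective (L G : Type) (eL : rel L) (eG : rel G)
  (f : L -> raag_word G) : Prop :=
  forall w1 w2, raag_eq eG (hom_ext f w1) (hom_ext f w2) -> raag_eq eL w1 w2.

Definition in_supp (G : eqType) (eG : rel G) (w : raag_word G) (x : G) : Prop :=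
  exists w' : raag_word G,
    [/\ raag_eq eG w' w,
        (forall w'', raag_eq eG w'' w -> size w' <= size w'') &
        x \in map fst w'].

Definition in_hom_supp (L : Type) (G : eqType) (eG : rel G)
  (f : L -> raag_word G) (x : G) : Prop :=
  exists v : L, in_supp eG (f v) x.

(* Complement of P_3 on vertices 0,1,2 (= v1,v2,v3): single edge {0,2}. *)
Definition P3c : rel 'I_3 :=
  fun i j => ((val i == 0) && (val j == 2)) || ((val i == 2) && (val j == 0)).

Definition full_embedding (L G : Type) (eL : rel L) (eG : rel G) (i : L -> G) : Prop :=
  injective i /\ (forall a b, eG (i a) (i b) = eL a b).

(* Main.v *)
From HB Require Import structures.
From Stdlib Require Import Relations Classical Lia.
Require Import Defs.
From mathcomp Require Import all_boot all_algebra zify.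
Set Implicit Arguments. Unset Strict Implicit. Unset Printing Implicit Defensive.


Section FreeRed.
Variable X : eqType.
Notation lt := (X * bool)%type.
Definition linv (l : lt) : lt := (l.1, ~~ l.2).
Lemma linvK : involutive linv.
Proof. by case=> x b; rewrite /linv /= negbK. Qed.
Lemma linv_inj : injective linv. Proof. exact: inv_inj linvK. Qed.

Definition rstep (l : lt) (w : seq lt) :=
  if w is l' :: w' then (if l' == linv l then w' else l :: w) else [:: l].
Definition red (w : seq lt) := foldr rstep [::] w.
Definition nr (a b : lt) := b != linv a.
Definition reduced (w : seq lt) := sorted nr w.

Lemma reduced_cons l w : reduced (l :: w) = (if w is l' :: _ then l' != linv l else true) && reduced w.
Proof. by case: w => //= l' w; rewrite /reduced /= . Qed.

Lemma reduced_behead l w : reduced (l :: w) -> reduced w.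
Proof. by rewrite reduced_cons => /andP[]. Qed.

Lemma rstep_reduced l w : reduced w -> reduced (rstep l w).
Proof.
case: w => [|l' w] // Hw; rewrite /=.
case: ifP => H; first exact: reduced_behead Hw.
by rewrite reduced_cons H Hw.
Qed.

Lemma red_reduced w : reduced (red w).
Proof. by elim: w => //= l w IH; apply: rstep_reduced. Qed.

Lemma reduced_red w : reduced w -> red w = w.
Proof.
elim: w => // l w IH Hw; rewrite /= IH ?(reduced_behead Hw) //.
move: Hw; rewrite reduced_cons; case: w {IH} => //= l' w /andP[H _].
by rewrite (negbTE H).
Qed.

Lemma redK w : red (red w) = red w.
Proof. exact: reduced_red (red_reduced w). Qed.

Lemma rstepK l w : reduced w -> rstep l (rstep (linv l) w) = w.
Proof.
case: w => [|l' w]; first by rewrite /= eqxx.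
move=> Hw; rewrite /= linvK; case: eqP => [El|/eqP H]; last by rewrite /= eqxx.
  rewrite El in Hw.
  move: Hw; rewrite reduced_cons; case: w => [|l'' w] /=; first by rewrite El.
  by case/andP=> H _; rewrite (negbTE H) El.
Qed.

Lemma rstepK' l w : reduced w -> rstep (linv l) (rstep l w) = w.
Proof. by move=> H; have := rstepK (linv l) H; rewrite linvK. Qed.

Lemma red_cat u v : red (u ++ v) = foldr rstep (red v) u.
Proof. by rewrite /red foldr_cat. Qed.

Lemma foldr_red u w : reduced w -> foldr rstep w (red u) = foldr rstep w u.
Proof.
move=> Hw; elim: u => //= l u IH.
rewrite -IH; have := red_reduced u.
case: (red u) => [|l' r] //= Hr.
case: eqP => [El|_] //=.
have Hr' : reduced r by exact: reduced_behead Hr.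
have Hf : reduced (foldr rstep w r).
  by elim: r {Hr Hr'} => //= m r IHr; apply: rstep_reduced.
by rewrite El rstepK.
Qed.

Lemma red_catl u v : red (red u ++ v) = red (u ++ v).
Proof. by rewrite !red_cat foldr_red // red_reduced. Qed.
Lemma red_catr u v : red (u ++ red v) = red (u ++ v).
Proof. by rewrite !red_cat redK. Qed.

Definition winv (w : seq lt) := rev (map linv w).

Lemma winv_cons l w : winv (l :: w) = rcons (winv w) (linv l).
Proof. by rewrite /winv /= rev_cons. Qed.
Lemma winv_cat u v : winv (u ++ v) = winv v ++ winv u.
Proof. by rewrite /winv map_cat rev_cat. Qed.
Lemma winvK : involutive winv.
Proof. by move=> w; rewrite /winv map_rev revK -map_comp (eq_map linvK) map_id. Qed.
Lemma size_winv w : size (winv w) = size w.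
Proof. by rewrite size_rev size_map. Qed.

Lemma foldr_winv u w : reduced w -> foldr rstep (foldr rstep w u) (winv u) = w.
Proof.
elim: u w => //= l u IH w Hw.
rewrite winv_cons -cats1 foldr_cat /= rstepK' ?IH //.
by elim: u {IH} => //= m u IHu; apply: rstep_reduced.
Qed.

Lemma red_winvl u : red (winv u ++ u) = [::].
Proof. by rewrite red_cat /red foldr_winv. Qed.
Lemma red_winvr u : red (u ++ winv u) = [::].
Proof. by rewrite -{1}(winvK u) red_winvl. Qed.

Lemma red_split u v : reduced u -> reduced v ->
  exists s u1 v1, [/\ u = u1 ++ s, v = winv s ++ v1 & red (u ++ v) = u1 ++ v1].
Proof.
move=> Hu Hv; rewrite red_cat (reduced_red Hv).
elim: u Hu => [|l u IH] Hu; first by exists [::], [::], v.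
have [s [u1 [v1 [E1 E2 E3]]]] := IH (reduced_behead Hu).
rewrite /= E3.
case: u1 E1 E3 => [|m u1] E1 E3 /=; last first.
  have Hm : m != linv l.
    by move: Hu; rewrite reduced_cons E1 /= => /andP[].
  rewrite (negbTE Hm); exists s, (l :: m :: u1), v1.
  by rewrite E1 E2.
case: v1 E2 E3 => [|m v1] E2 E3 /=.
  by exists s, [:: l], [::]; rewrite E1 E2.
case: eqP => [Em|_].
  exists (l :: s), [::], v1; split => //; first by rewrite E1.
  by rewrite E2 winv_cons -cats1 -catA Em.
by exists s, [:: l], (m :: v1); rewrite E1 E2.
Qed.

Lemma reduced_catl u v : reduced (u ++ v) -> reduced u.
Proof. by apply: prefix_sorted; apply: prefix_prefix. Qed.
Lemma reduced_catr u v : reduced (u ++ v) -> reduced v.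
Proof. by apply: suffix_sorted; apply: suffix_suffix. Qed.
End FreeRed.

Section FreeGroup.
Variable X : choiceType.
Notation lt := (X * bool)%type.

Record fg := FG { fgval :> seq lt; fgP : reduced fgval }.
HB.instance Definition _ := [isSub for fgval].
HB.instance Definition _ := [Choice of fg by <:].

Definition Mk (w : seq lt) : fg := FG (red_reduced w).
Definition fg_one : fg := @FG [::] isT.
Definition fg_mul (u v : fg) : fg := Mk (val u ++ val v).
Definition fg_inv (u : fg) : fg := Mk (winv (val u)).

Lemma MkK (u : fg) : Mk (val u) = u.
Proof. by apply: val_inj; rewrite /= reduced_red // fgP. Qed.

Lemma fg_mulA : associative fg_mul.
Proof.
by move=> u v w; apply: val_inj; rewrite /= red_catl red_catr catA.
Qed.
Lemma fg_mul1 : left_id fg_one fg_mul.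
Proof. by move=> u; rewrite /fg_mul /= MkK. Qed.
Lemma fg_mulg1 : right_id fg_one fg_mul.
Proof. by move=> u; rewrite /fg_mul /= cats0 MkK. Qed.
Lemma fg_mulV : left_inverse fg_one fg_inv fg_mul.
Proof. by move=> u; apply: val_inj; rewrite /= red_catl red_winvl. Qed.
Lemma fg_mulgV : right_inverse fg_one fg_inv fg_mul.
Proof. by move=> u; apply: val_inj; rewrite /= red_catr red_winvr. Qed.

HB.instance Definition _ := isGroup.Build fg fg_mulA fg_mul1 fg_mulg1 fg_mulV fg_mulgV.

Local Open Scope group_scope.
Lemma MkM u v : Mk (u ++ v) = Mk u * Mk v.
Proof. by apply: val_inj; rewrite /= red_catl red_catr. Qed.
Lemma MkV u : Mk (winv u) = (Mk u)^-1.
Proof.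
apply: (mulgI (Mk u)); rewrite mulgV -MkM; apply: val_inj => /=.
exact: red_winvr.
Qed.
Lemma Mk1 : Mk [::] = 1. Proof. by apply: val_inj. Qed.
Lemma Mk_eq u v : (Mk u = Mk v) <-> red u = red v.
Proof. by split=> [E|E]; [have := congr1 val E | apply: val_inj]. Qed.
End FreeGroup.


Section Zexp.
Local Open Scope group_scope.
Variable G : groupType.
Implicit Types x y g : G.
Definition zexp x (z : int) : G :=
  match z with Posz n => x ^+ n | Negz n => (x ^+ n.+1)^-1 end.

Lemma zexp_sub x (n m : nat) : zexp x (n%:Z - m%:Z)%R = x ^+ n * (x ^+ m)^-1.
Proof.
case: (leqP m n) => H.
  by rewrite subzn //= -{2}(subnK H) expgnDr mulgK.
have -> : (n%:Z - m%:Z)%R = Negz (m - n).-1.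
  rewrite NegzE prednK ?subn_gt0 // -[in RHS](subzn (ltnW H)).
  by rewrite GRing.opprB.
rewrite /= prednK ?subn_gt0 // -{2}(subnK (ltnW H)) expgnDr invgM.
by rewrite mulgA mulgV mul1g.
Qed.

Lemma zexp_nat x (n : nat) : zexp x n = x ^+ n. Proof. by []. Qed.

Lemma zexp_decomp (z : int) : exists n m : nat, z = (n%:Z - m%:Z)%R.
Proof.
case: z => n; first by exists n, 0%N; rewrite GRing.subr0.
by exists 0%N, n.+1; rewrite GRing.sub0r.
Qed.

Lemma commute_XV x n m : commute (x ^+ n) ((x ^+ m)^-1).
Proof. by apply: commuteV; apply: commuteX2. Qed.

Lemma zexpD x (a b : int) : zexp x (a + b)%R = zexp x a * zexp x b.
Proof.
have [n1 [m1 ->]] := zexp_decomp a; have [n2 [m2 ->]] := zexp_decomp b.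
have -> : (n1%:Z - m1%:Z + (n2%:Z - m2%:Z))%R = ((n1 + n2)%N%:Z - (m1 + m2)%N%:Z)%R.
  by rewrite !PoszD GRing.addrACA GRing.opprD.
rewrite !zexp_sub !expgnDr invgM.
rewrite -!mulgA; congr (_ * _).
rewrite mulgA; apply: commute_sym; apply: commuteM.
  by apply: commute_sym; apply: commute_XV.
by apply: commuteV; apply: commute_sym; apply: commuteV; apply: commuteX2.
Qed.

Lemma zexpN x (a : int) : zexp x (- a)%R = (zexp x a)^-1.
Proof.
apply: (mulgI (zexp x a)); rewrite mulgV -zexpD GRing.subrr //.
Qed.

Lemma zexp0 x : zexp x 0 = 1. Proof. by []. Qed.
Lemma zexp1 x : zexp x 1 = x. Proof. by []. Qed.
Lemma zexp1g (a : int) : zexp 1 a = 1 :> G.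
Proof. by case: a => n /=; rewrite expg1n ?invg1. Qed.

Lemma commute_zexp x y (a b : int) : commute x y -> commute (zexp x a) (zexp y b).
Proof.
move=> C; case: a => n; case: b => m /=;
  by repeat first [apply: commuteV | (apply: commute_sym; apply: commuteV)];
     apply: commuteX2.
Qed.

Lemma zexpM x y (a : int) : commute x y -> zexp (x * y) a = zexp x a * zexp y a.
Proof.
move=> C; case: a => n /=; rewrite expgMn //.
by rewrite invgM; apply: commute_sym; apply: commuteV; apply: commute_sym;
   apply: commuteV; apply: commuteX2.
Qed.

Lemma zexpJ x g (a : int) : zexp (x ^ g) a = (zexp x a) ^ g.
Proof. by case: a => n /=; rewrite ?conjVg conjXg. Qed.

Lemma zexpV x (a : int) : zexp (x^-1) a = (zexp x a)^-1.
Proof. by case: a => n /=; rewrite expVgn. Qed.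
End Zexp.


Section Dep.
Local Open Scope group_scope.
Variable G : groupType.
Implicit Types u v g : G.
Definition dep u v := exists p q : int, (p, q) != (0%R, 0%R) /\ zexp u p * zexp v q = 1.

Lemma dep_sym u v : commute u v -> dep u v -> dep v u.
Proof.
move=> C [p [q [H E]]]; exists q, p; split.
  by move: H; apply: contra; rewrite !xpair_eqE andbC.
by rewrite -(commute_zexp p q C).
Qed.

Lemma dep_stepM u v : commute u v -> dep u (u * v) -> dep u v.
Proof.
move=> C [p [q [H E]]]; exists (p + q)%R, q; split.
  move: H; apply: contra; rewrite !xpair_eqE => /andP[/eqP H1 /eqP H2].
  by move: H1; rewrite H2 GRing.addr0 => ->; rewrite eqxx.
by rewrite zexpD -mulgA -zexpM.
Qed.

Lemma dep_stepV u v : commute u v -> dep u (u^-1 * v) -> dep u v.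
Proof.
move=> C [p [q [H E]]]; exists (p - q)%R, q; split.
  move: H; apply: contra; rewrite !xpair_eqE => /andP[/eqP H1 /eqP H2].
  by move: H1; rewrite H2 GRing.subr0 => ->; rewrite eqxx.
rewrite zexpD -mulgA zexpN -zexpV -zexpM //.
by apply: commute_sym; apply: commuteV; apply: commute_sym.
Qed.

Lemma dep_conj u v g : dep u v -> dep (u ^ g) (v ^ g).
Proof.
move=> [p [q [H E]]]; exists p, q; split => //.
by rewrite !zexpJ -conjMg E conj1g.
Qed.

Lemma dep_1l v : dep 1 v.
Proof. by exists 1%R, 0%R; split => //; rewrite zexp1g mul1g. Qed.
Lemma dep_1r u : dep u 1.
Proof. by exists 0%R, 1%R; split => //; rewrite zexp1g mulg1. Qed.
End Dep.

Section Centralizer.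
Local Open Scope group_scope.
Variable X : choiceType.
Notation lt := (X * bool)%type.
Notation fg := (fg X).

Lemma winv_rcons (s : seq lt) z : winv (rcons s z) = linv z :: winv s.
Proof. by rewrite /winv map_rcons rev_rcons. Qed.

Lemma val_mul (u v : fg) : val (u * v) = red (val u ++ val v).
Proof. by []. Qed.

Lemma fg_conj_split (w : fg) x w' : val w = x :: rcons w' (linv x) ->
  exists w'' : fg, [/\ val w'' = w', w = w'' ^ Mk [:: linv x] & size w' = (size w).-2].
Proof.
move=> E; have Hr : reduced w' by have := fgP w; rewrite E => /reduced_behead;
  rewrite -cats1 => /reduced_catl.
exists (FG Hr); split => //; last by rewrite E /= size_rcons.
have -> : FG Hr = Mk w' by apply: val_inj; rewrite /= reduced_red.
rewrite /conjg -MkV -[w]MkK E -!MkM; apply/Mk_eq.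
by rewrite /= (reduced_red Hr) /winv /= linvK cats1.
Qed.

Lemma centralizer_ind n (u v : fg) : size (val u) + size (val v) <= n ->
  commute u v -> dep u v.
Proof.
elim: n u v => [|n IH] u v Hn C.
  move: Hn; rewrite leqn0 addn_eq0 size_eq0 => /andP[/eqP Hu _].
  have -> : u = 1 by apply: val_inj; rewrite Hu.
  exact: dep_1l.
have [Hu0|Hu0] := eqVneq (val u) [::].
  have -> : u = 1 by apply: val_inj; rewrite Hu0.
  exact: dep_1l.
have [Hv0|Hv0] := eqVneq (val v) [::].
  have -> : v = 1 by apply: val_inj; rewrite Hv0.
  exact: dep_1r.
have Cuu : commute u u by [].
have Ev : red (val u ++ val v) = red (val v ++ val u).
  by rewrite -!val_mul C.
have [Lv|Lv] := ltnP (size (val (u * v))) (size (val v)).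
  apply: dep_stepM => //; apply: IH; last exact: commuteM.
  have Hs : 0 < size (val u) by rewrite lt0n size_eq0.
  move: Hn Lv Hs; move: (size (val u)) (size (val v)) (size (val (u * v))) => a b c; lia.
have [Lu|Lu] := ltnP (size (val (u * v))) (size (val u)).
  apply: dep_sym; first by apply: commute_sym.
  apply: dep_stepM; first by apply: commute_sym.
  rewrite -C; apply: IH; last by apply: commuteM => //; apply: commute_sym.
  have Hs : 0 < size (val v) by rewrite lt0n size_eq0.
  move: Hn Lu Hs; move: (size (val u)) (size (val v)) (size (val (v * u))) => a b c; lia.
have [s [u1 [v1 [E1 E2 E3]]]] := red_split (fgP u) (fgP v).
have [t [v2 [u2 [F1 F2 F3]]]] := red_split (fgP v) (fgP u).
change (val u = u1 ++ s) in E1; change (val v = winv s ++ v1) in E2.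
change (red (val u ++ val v) = u1 ++ v1) in E3.
change (val v = v2 ++ t) in F1; change (val u = winv t ++ u2) in F2.
change (red (val v ++ val u) = v2 ++ u2) in F3.
have Su : size (val u) = size u1 + size s by rewrite E1 size_cat addnC.
have Sv : size (val v) = size s + size v1 by rewrite E2 size_cat size_winv.
have Su' : size (val u) = size t + size u2 by rewrite F2 size_cat size_winv.
have Sv' : size (val v) = size v2 + size t by rewrite F1 size_cat addnC.
have SL : size (val (u * v)) = size u1 + size v1 by rewrite val_mul E3 size_cat.
have SL' : size (val (u * v)) = size v2 + size u2 by rewrite val_mul Ev F3 size_cat.
case/lastP: s E1 E2 E3 Su Sv => [|s z] E1 E2 E3 Su Sv.
  (* no cancellation: strings commute *)
  have Ht : t = [::].
    apply/eqP; rewrite -size_eq0; move: Su Sv Su' Sv' SL SL'.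
    rewrite /=; move: (size (val u)) (size (val v)) (size (val (u * v))) => a b c; lia.
  rewrite Ht cats0 in F1; rewrite cats0 in E1.
  have {}F2 : val u = u2 by rewrite F2 Ht.
  have Ecat : val u ++ val v = val v ++ val u.
    have {}E2 : val v = v1 by rewrite E2.
    have H1 : red (val u ++ val v) = val u ++ val v by rewrite E3 E1 E2.
    have H2 : red (val v ++ val u) = val v ++ val u by rewrite F3 F1 F2.
    by rewrite -H1 -H2 Ev.
  have key : forall a b : fg, size (val a) + size (val b) <= n.+1 -> commute a b ->
      val a != [::] -> val a ++ val b = val b ++ val a -> size (val a) <= size (val b) ->
      dep a b.
    move=> a b Hab Cab Ha0 Eab Sab.
    have Eb : val b = val a ++ drop (size (val a)) (val b).
      have := congr1 (take (size (val a))) Eab.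
      rewrite take_size_cat // takel_cat // => Et.
      by rewrite {1}Et cat_take_drop.
    have Hr : reduced (drop (size (val a)) (val b)).
      have : reduced (val a ++ drop (size (val a)) (val b)) by rewrite -Eb; exact: fgP.
      exact: reduced_catr.
    have Eb' : a^-1 * b = FG Hr.
      apply: (mulgI a); rewrite mulgA mulgV mul1g; apply: val_inj.
      by rewrite val_mul /= -Eb reduced_red // fgP.
    apply: dep_stepV => //; rewrite Eb'; apply: IH; last first.
      by rewrite -Eb'; apply: commuteM => //; apply: commuteV.
    rewrite /= size_drop.
    have Hs : 0 < size (val a) by rewrite lt0n size_eq0.
    move: Hab Sab Hs; move: (size (val a)) (size (val b)) => x y; lia.
  have [Suv|Suv] := leqP (size (val u)) (size (val v)).
    exact: key.
  apply: dep_sym => //; apply: key => //.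
    by rewrite addnC.
  by apply: ltnW.
have Sst : size (rcons s z) = size t.
  move: Su Sv Su' Sv' SL SL'.
  move: (size (val u)) (size (val v)) (size (val (u * v))) => a b c; lia.
case/lastP: t Sst F1 F2 F3 Su' Sv' SL' => [|t z'] Sst F1 F2 F3 Su' Sv' SL'.
  by rewrite size_rcons in Sst.
case: u1 E1 E3 Su SL => [|x u1'] E1 E3 Su SL.
  move: Su SL Lv Sv; rewrite size_rcons /=.
  move: (size (val u)) (size (val v)) (size (val (u * v))) => a b c; lia.
case: v2 F1 F3 Sv' SL' => [|y v2'] F1 F3 Sv' SL'.
  move: Su' SL' Lu Sst; rewrite !size_rcons /=.
  move: (size (val u)) (size (val v)) (size (val (u * v))) => a b c; lia.
have Exy : x = y.
  by have := Ev; rewrite E3 F3 => -[].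
subst y.
have Ez : z = linv x.
  have := E2; rewrite winv_rcons F1 => -[] ->; by rewrite linvK.
have Ez' : z' = linv x.
  have := F2; rewrite winv_rcons E1 => -[] Hx _; by rewrite Hx linvK.
subst z z'.
have Eu : val u = x :: rcons (u1' ++ s) (linv x) by rewrite E1 rcons_cat.
have Ev' : val v = x :: rcons (v2' ++ t) (linv x) by rewrite F1 rcons_cat.
have [u'' [Hu1 Hu2 Hu3]] := fg_conj_split Eu.
have [v'' [Hv1 Hv2 Hv3]] := fg_conj_split Ev'.
rewrite Hu2 Hv2; apply: dep_conj; apply: IH.
  rewrite Hu1 Hv1 Hu3 Hv3.
  have H2u : 2 <= size (val u) by rewrite Eu /= size_rcons.
  have H2v : 2 <= size (val v) by rewrite Ev' /= size_rcons.
  move: Hn H2u H2v; move: (size (val u)) (size (val v)) => a b; lia.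
apply: (conjg_inj (Mk [:: linv x])).
by rewrite !conjMg -Hu2 -Hv2.
Qed.

Theorem centralizer (u v : fg) : commute u v -> dep u v.
Proof. exact: (@centralizer_ind (size (val u) + size (val v))). Qed.
End Centralizer.


Section Raag.
Variable T : eqType.
Variable e : rel T.
Notation word := (raag_word T).
Notation req := (raag_eq e).

Lemma req_refl w : req w w. Proof. exact: rst_refl. Qed.
Lemma req_sym u v : req u v -> req v u. Proof. exact: rst_sym. Qed.
Lemma req_trans u v w : req u v -> req v w -> req u w. Proof. exact: rst_trans. Qed.
Lemma req_step u v : raag_step e u v -> req u v. Proof. exact: rst_step. Qed.

Lemma step_ctx p s u v : raag_step e u v -> raag_step e (p ++ u ++ s) (p ++ v ++ s).
Proof.
case=> [u1 v1 x b|u1 v1 x y b c H].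
  have -> : p ++ (u1 ++ [:: (x, b); (x, ~~ b)] ++ v1) ++ s =
          (p ++ u1) ++ [:: (x, b); (x, ~~ b)] ++ (v1 ++ s) by rewrite !catA.
  have -> : p ++ (u1 ++ v1) ++ s = (p ++ u1) ++ (v1 ++ s) by rewrite !catA.
  exact: raag_cancel.
rewrite -!catA.
have -> : p ++ u1 ++ [:: (x, b); (y, c)] ++ v1 ++ s =
          (p ++ u1) ++ [:: (x, b); (y, c)] ++ (v1 ++ s) by rewrite !catA.
have -> : p ++ u1 ++ [:: (y, c); (x, b)] ++ v1 ++ s =
          (p ++ u1) ++ [:: (y, c); (x, b)] ++ (v1 ++ s) by rewrite !catA.
exact: raag_comm.
Qed.

Lemma req_ctx p s u v : req u v -> req (p ++ u ++ s) (p ++ v ++ s).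
Proof.
elim=> [a b H|a|a b _ IH|a b c _ IH1 _ IH2].
- by apply: req_step; apply: step_ctx.
- exact: req_refl.
- exact: req_sym.
- exact: req_trans IH2.
Qed.

Lemma req_cat u u' v v' : req u u' -> req v v' -> req (u ++ v) (u' ++ v').
Proof.
move=> H1 H2; apply: (req_trans (v := u' ++ v)).
  by have := req_ctx [::] v H1; rewrite /= .
by have := req_ctx u' [::] H2; rewrite !cats0.
Qed.

Lemma req_cancel u v l : req (u ++ [:: l; linv l] ++ v) (u ++ v).
Proof. by case: l => x b; apply: req_step; apply: raag_cancel. Qed.

Lemma req_red w : req w (red w).
Proof.
elim: w => [|l w IH] /=; first exact: req_refl.
apply: (req_trans (v := l :: red w)).
  by have := req_ctx [:: l] [::] IH; rewrite !cats0.
have := red_reduced w; case: (red w) => [|l' r] _ /=; first exact: req_refl.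
case: eqP => [->|_]; last exact: req_refl.
by have := req_cancel [::] r l.
Qed.

Lemma req_red_nil w : red w = [::] -> req w [::].
Proof. by move=> H; rewrite -H; apply: req_red. Qed.

Lemma inv_wordE (w : word) : inv_word w = winv w. Proof. by []. Qed.

Hypothesis e_sym : symmetric e.

Lemma winv_pair (l1 l2 : T * bool) : winv [:: l1; l2] = [:: linv l2; linv l1].
Proof. by []. Qed.

Lemma req_inv u v : req u v -> req (inv_word u) (inv_word v).
Proof.
elim=> [a b H|a|a b _ IH|a b c _ IH1 _ IH2].
- apply: req_step; rewrite !inv_wordE; case: H => [u1 v1 x b0|u1 v1 x y b0 c H].
    rewrite !winv_cat winv_pair /linv /= negbK -catA.
    exact: raag_cancel.
  rewrite !winv_cat !winv_pair /linv /= -!catA.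
  by apply: raag_comm; rewrite e_sym.
- exact: req_refl.
- exact: req_sym IH.
- exact: req_trans IH1 IH2.
Qed.
End Raag.

Section HomExt.
Variables (L G : Type).
Lemma hom_ext_cat (f : L -> raag_word G) u v :
  hom_ext f (u ++ v) = hom_ext f u ++ hom_ext f v.
Proof. by rewrite /hom_ext map_cat flatten_cat. Qed.
Lemma hom_ext_cons (f : L -> raag_word G) l w :
  hom_ext f (l :: w) = (if l.2 then f l.1 else inv_word (f l.1)) ++ hom_ext f w.
Proof. by []. Qed.
End HomExt.

Lemma req_hom_ext (L : Type) (T : eqType) (e : rel T) (esym : symmetric e)
  (f g : L -> raag_word T) w :
  (forall v, raag_eq e (f v) (g v)) -> raag_eq e (hom_ext f w) (hom_ext g w).
Proof.
move=> H; elim: w => [|l w IH]; first exact: req_refl.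
rewrite !hom_ext_cons; apply: req_cat => //.
by case: l.2; [apply: H | apply: req_inv => //; apply: H].
Qed.

Section Proj.
Variable T : eqType.
Variable e : rel T.
Variable Q : pred T.
Hypothesis Qna : forall y z, Q y -> Q z -> ~~ e y z.
Definition proj (w : raag_word T) := filter (fun l => Q l.1) w.

Lemma proj_cat u v : proj (u ++ v) = proj u ++ proj v.
Proof. exact: filter_cat. Qed.

Lemma red_cancel_mid (u v : seq (T * bool)) l : red (u ++ [:: l; linv l] ++ v) = red (u ++ v).
Proof.
rewrite !red_cat /=.
by rewrite rstepK // red_reduced.
Qed.

Lemma proj_req u v : raag_eq e u v -> red (proj u) = red (proj v).
Proof.
elim=> [a b H|a|a b _ IH|a b c _ IH1 _ IH2] //; last by rewrite IH1.
case: H => [u1 v1 x b0|u1 v1 x y b0 c H].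
  rewrite !proj_cat /=; case: (Q x) => //.
  by have := red_cancel_mid (proj u1) (proj v1) (x, b0).
rewrite !proj_cat /=.
case Qx: (Q x); case Qy: (Q y) => //.
by have := Qna Qx Qy; rewrite H.
Qed.
End Proj.


Section Complete.
Variable T : eqType.
Variable e : rel T.
Hypothesis e_sym : symmetric e.
Hypothesis e_irr : irreflexive e.
Notation req := (raag_eq e).

Lemma move_past (l : T * bool) A B : all (fun a => e l.1 a.1) A ->
  req (l :: A ++ B) (A ++ l :: B).
Proof.
elim: A => [|a A IH] /=; first by move=> _; apply: req_refl.
case/andP=> Ha HA; apply: (req_trans (v := a :: l :: A ++ B)).
  apply: req_step; case: l Ha {IH HA} => x b; case: a => y c /= H.
  by have := @raag_comm _ e [::] (A ++ B) x y b c H.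
by have := req_ctx [:: a] [::] (IH HA); rewrite !cats0.
Qed.

Lemma sort_req (Q : pred T) (w : raag_word T) :
  (forall l1 l2, l1 \in w -> l2 \in w -> Q l1.1 -> ~~ Q l2.1 -> e l1.1 l2.1) ->
  req w (filter (fun l => Q l.1) w ++ filter (fun l => ~~ Q l.1) w).
Proof.
elim: w => [|l w IH] H /=; first exact: req_refl.
have IH' : req w ([seq l <- w | Q l.1] ++ [seq l <- w | ~~ Q l.1]).
  by apply: IH => l1 l2 H1 H2; apply: H; rewrite inE ?H1 ?H2 orbT.
case: ifP => Ql /=.
  by have := req_ctx [:: l] [::] IH'; rewrite !cats0.
apply: (req_trans (v := l :: filter (fun l => Q l.1) w ++ filter (fun l => ~~ Q l.1) w)).
  by have := req_ctx [:: l] [::] IH'; rewrite !cats0.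
apply: move_past; apply/allP => a; rewrite mem_filter => /andP[Qa aw].
rewrite e_sym; apply: H => //; first by rewrite inE aw orbT.
  by rewrite inE eqxx.
by rewrite Ql.
Qed.

Variable S : pred T.
Hypothesis trans : forall x y z, S x -> S y -> S z -> ~~ e x y -> ~~ e y z -> ~~ e x z.

Definition partx x := fun y => S y && ~~ e x y.

Lemma complete_ind n (w : raag_word T) : size w <= n ->
  all (fun l => S l.1) w ->
  (forall x, S x -> red (filter (fun l => partx x l.1) w) = [::]) -> req w [::].
Proof.
elim: n w => [|n IH] w Hn HS Hred.
  by case: w Hn HS Hred => // _ _ _; apply: req_refl.
case: w Hn HS Hred => [|l w'] Hn HS Hred; first exact: req_refl.
set w := l :: w' in Hn HS Hred *.
set x := l.1.
have Sx : S x by move: HS => /= /andP[].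
have HSw : forall l', l' \in w -> S l'.1 by move=> l'; move/allP: HS; apply.
apply: (req_trans (sort_req (Q := partx x) _)).
  move=> l1 l2 H1 H2; rewrite /partx HSw //= => Q1 Q2.
  rewrite (HSw _ H2) /= negbK in Q2; apply/negPn/negP => N.
  by have := trans Sx (HSw _ H1) (HSw _ H2) Q1 N; rewrite Q2.
rewrite -[[::]]/([::] ++ [::]); apply: req_cat.
  by apply: req_red_nil; apply: Hred.
apply: IH.
- rewrite /w /= /partx Sx e_irr /=.
  rewrite size_filter; apply: leq_trans (count_size _ _) _; exact: Hn.
- by apply/allP => l'; rewrite mem_filter => /andP[_ H]; apply: HSw.
- move=> y Sy; rewrite -filter_predI.
  case Exy: (e x y).
  + rewrite -(Hred y Sy); congr red; apply: eq_filter => l' /=.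
    rewrite /partx; case Sl: (S l'.1) => //=.
    case Eyl: (e y l'.1) => //=; rewrite negbK.
    apply/negPn/negP => N; have H2 : ~~ e l'.1 y by rewrite e_sym Eyl.
    by have := trans Sx Sl Sy N H2; rewrite Exy.
  + rewrite (@eq_in_filter _ _ pred0) ?filter_pred0 // => l' _ /=.
    rewrite /partx; case Sl: (S l'.1) => //=.
    case Eyl: (e y l'.1) => //=.
    by have := trans Sx Sy Sl; rewrite Exy Eyl => /(_ isT isT) ->.
Qed.

Lemma complete (w : raag_word T) : all (fun l => S l.1) w ->
  (forall x, S x -> red (filter (fun l => partx x l.1) w) = [::]) -> req w [::].
Proof. exact: complete_ind. Qed.
End Complete.


Section Geval.
Local Open Scope group_scope.
Variable L : Type.
Variable G : groupType.
Variable g : L -> G.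
Definition lval (l : L * bool) := if l.2 then g l.1 else (g l.1)^-1.
Definition geval (w : raag_word L) := foldr (fun l acc => lval l * acc) 1 w.

Lemma geval_cat u v : geval (u ++ v) = geval u * geval v.
Proof. by elim: u => [|l u IH] /=; rewrite ?mul1g // IH mulgA. Qed.

Lemma inv_word_cons (l : L * bool) u : inv_word (l :: u) = inv_word u ++ [:: (l.1, ~~ l.2)].
Proof. by rewrite /inv_word /= rev_cons cats1. Qed.

Lemma geval_inv u : geval (inv_word u) = (geval u)^-1.
Proof.
elim: u => [|l u IH]; first by rewrite /= invg1.
rewrite inv_word_cons geval_cat IH /= invgM mulg1.
by congr (_ * _); case: l => x [] /=; rewrite ?invgK.
Qed.

Lemma geval_nseqT v n : geval (nseq n (v, true)) = g v ^+ n.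
Proof. by elim: n => [|n IH] //=; rewrite IH -expgS. Qed.
Lemma geval_nseqF v n : geval (nseq n (v, false)) = (g v)^-1 ^+ n.
Proof. by elim: n => [|n IH] //=; rewrite IH -expgS. Qed.

Variable eL : rel L.
Hypothesis gcomm : forall x y, eL x y -> commute (g x) (g y).

Lemma geval_req u v : raag_eq eL u v -> geval u = geval v.
Proof.
elim=> [a b H|a|a b _ IH|a b c _ IH1 _ IH2] //; last by rewrite IH1.
case: H => [u1 v1 x b0|u1 v1 x y b0 c H].
  rewrite !geval_cat /= mulg1; congr (_ * _).
  by case: b0; rewrite /lval /= ?mulgV ?mulVg mul1g.
rewrite !geval_cat; congr (_ * _); rewrite /= !mulgA; congr (_ * _).
have C := gcomm H.
by case: b0; case: c; rewrite /lval /= !mulg1;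
  repeat first [apply: commuteV | (apply: commute_sym; apply: commuteV)]; apply: commute_sym.
Qed.
End Geval.

Lemma geval_hom_ext (L M : Type) (G : groupType) (f : L -> raag_word M) (g : M -> G) w :
  geval g (hom_ext f w) = geval (fun v => geval g (f v)) w.
Proof.
elim: w => [|l w IH] //=; rewrite hom_ext_cons geval_cat IH; congr (_ * _)%g.
by case: l => v [] //=; rewrite geval_inv.
Qed.

Section Phi.
Local Open Scope group_scope.
Variable T : choiceType.
Variable Q : pred T.
Definition phi (w : raag_word T) : fg T := Mk (filter (fun l => Q l.1) w).

Lemma phi_geval w : phi w = geval (fun x => if Q x then Mk [:: (x, true)] else 1) w.
Proof.
elim: w => [|l w IH] /=; first by rewrite /phi Mk1.
rewrite -IH /phi /lval /=; case: l => x b /=; case: (Q x) => /=; last first.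
  by case: b; rewrite ?invg1 mul1g.
rewrite -cat1s MkM; congr (_ * _); case: b => //=.
Qed.
End Phi.

Definition va : 'I_3 := @Ordinal 3 1 isT.
Definition vb : 'I_3 := @Ordinal 3 0 isT.
Definition vc : 'I_3 := @Ordinal 3 2 isT.

Definition wpow (v : 'I_3) (z : int) : raag_word 'I_3 :=
  match z with Posz n => nseq n (v, true) | Negz n => nseq n.+1 (v, false) end.
Definition gw (k : nat) (pq : int * int) : raag_word 'I_3 :=
  nseq k (va, true) ++ wpow vb pq.1 ++ wpow vc pq.2 ++ nseq k (va, false).
Definition commw (u v : raag_word 'I_3) := u ++ v ++ inv_word u ++ inv_word v.
Fixpoint nest (acc : raag_word 'I_3) (k : nat) (L : seq (int * int)) :=
  match L with [::] => acc | pq :: L' => nest (commw acc (gw k pq)) k.+1 L' end.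

Section WordVals.
Local Open Scope group_scope.
Variable G : groupType.
Variable g : 'I_3 -> G.
Notation ge := (geval g).

Lemma geval_wpow v z : ge (wpow v z) = zexp (g v) z.
Proof.
case: z => n; first exact: geval_nseqT.
by have := geval_nseqF g v n.+1; rewrite expVgn.
Qed.

Lemma geval_gw k pq : ge (gw k pq) =
  g va ^+ k * (zexp (g vb) pq.1 * zexp (g vc) pq.2) * (g va)^-1 ^+ k.
Proof.
by rewrite /gw !geval_cat geval_nseqT geval_nseqF !geval_wpow !mulgA.
Qed.

Lemma geval_commw u v : ge (commw u v) = ge u * ge v * (ge u)^-1 * (ge v)^-1.
Proof. by rewrite /commw !geval_cat !geval_inv !mulgA. Qed.

Lemma nest_triv acc k L :
  (ge acc = 1 \/ exists2 i, i < size L & zexp (g vb) (nth (0,0)%R L i).1 * zexp (g vc) (nth (0,0)%R L i).2 = 1) ->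
  ge (nest acc k L) = 1.
Proof.
elim: L acc k => [|pq L IH] acc k /=.
  by case=> // -[i]; rewrite ltn0.
case=> [Ha|[[|i] Hi Ei]]; apply: IH.
- left; by rewrite geval_commw Ha !mul1g invg1 mulg1 mulgV.
- left; rewrite geval_commw geval_gw /= Ei mulg1 -expgMn; last first.
    by apply: commuteV; apply: commute_refl.
  by rewrite mulgV expg1n mulg1 invg1 mulg1 mulgV.
- by right; exists i.
Qed.
End WordVals.


Section Mats.
Import GRing.Theory.
Local Open Scope ring_scope.
Variable n : nat.
Notation N := n.+1.
Notation M := 'M[int]_N.
Implicit Types i j k l : 'I_N.

Definition Um (x : int) i j : M := 1%:M + x *: delta_mx i j.

Lemma Um_mul x y i j : i != j -> Um x i j *m Um y i j = Um (x + y) i j.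
Proof.
move=> Hij; rewrite /Um mulmxDl !mulmxDr -!scalemxAl -!scalemxAr !mul1mx !mulmx1.
rewrite mul_delta_mx_0 1?eq_sym // !scaler0 addr0 scalerDl.
by rewrite -addrA [y *: _ + _]addrC addrA.
Qed.

Lemma Um0 i j : Um 0 i j = 1%:M.
Proof. by rewrite /Um scale0r addr0. Qed.

Lemma Um_unit x i j : i != j -> Um x i j \in unitmx.
Proof.
move=> H; have := Um_mul x (- x) H; rewrite subrr Um0.
by case/mulmx1_unit.
Qed.

Lemma Um_comm x y i k l : i != k -> k != l -> i != l ->
  Um x i k *m Um y k l = Um (x * y) i l *m Um y k l *m Um x i k.
Proof.
move=> Hik Hkl Hil.
rewrite /Um !mulmxDl !mulmxDr -!scalemxAl -!scalemxAr !mul1mx !mulmx1.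
rewrite ?mulmxDl -?scalemxAl ?mul1mx.
rewrite mul_delta_mx.
rewrite !mul_delta_mx_0 1?(eq_sym l) // ?mul0mx !scaler0 !addr0 scalerA.
by rewrite scaler0 addr0 !addrA.
Qed.

Lemma sum_sel (F : 'I_N -> M) i : \sum_c F c *+ (c == i) = F i.
Proof.
rewrite (bigD1 i) //= eqxx mulr1n big1 ?addr0 // => c /negbTE ->.
by rewrite mulr0n.
Qed.
Lemma sum_sel' (F : 'I_N -> M) i : \sum_c F c *+ (i == c) = F i.
Proof. by rewrite -(sum_sel F i); apply: eq_bigr => c _; rewrite eq_sym. Qed.

Definition Pm : M := \sum_(c < N) delta_mx (ordS c) c.
Definition Qm : M := \sum_(r < N) delta_mx r (ordS r).

Lemma PmE i j : Pm *m delta_mx i j = delta_mx (ordS i) j.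
Proof.
rewrite /Pm mulmx_suml.
under eq_bigr => c _ do rewrite mul_delta_mx_cond.
by rewrite (sum_sel (fun c => delta_mx (ordS c) j)).
Qed.

Lemma QmE i j : delta_mx i j *m Qm = delta_mx i (ordS j).
Proof.
rewrite /Qm mulmx_sumr.
under eq_bigr => c _ do rewrite mul_delta_mx_cond.
by rewrite (sum_sel' (fun c => delta_mx i (ordS c))).
Qed.

Lemma PQ : Pm *m Qm = 1%:M.
Proof.
rewrite {1}/Pm mulmx_suml.
under eq_bigr => c _ do rewrite QmE.
by rewrite mx1_sum_delta [RHS](reindex_inj (@ordS_inj N)).
Qed.

Lemma PmE' i j : delta_mx i (ordS j) *m Pm = delta_mx i j.
Proof.
rewrite /Pm mulmx_sumr.
under eq_bigr => c _ do rewrite mul_delta_mx_cond (inj_eq (@ordS_inj N)).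
by rewrite (sum_sel' (fun c => delta_mx i c)).
Qed.

Lemma QP : Qm *m Pm = 1%:M.
Proof.
rewrite {1}/Qm mulmx_suml.
under eq_bigr => c _ do rewrite PmE'.
by rewrite mx1_sum_delta.
Qed.

Lemma Pm_conj x i j : Pm *m Um x i j *m Qm = Um x (ordS i) (ordS j).
Proof.
rewrite /Um mulmxDr mulmxDl mulmx1 PQ -scalemxAr -scalemxAl PmE QmE //.
Qed.
End Mats.

Section GL.
Import GRing.Theory.
Variable n : nat.
Notation N := n.+1.
Notation M := 'M[int]_N.
Implicit Types i j k l : 'I_N.

Record glz := GLZ { gmx : M; gmxP : gmx \in unitmx }.
HB.instance Definition _ := [isSub for gmx].
HB.instance Definition _ := [Choice of glz by <:].

Local Open Scope ring_scope.
Lemma gl_mul_subproof (A B : glz) : gmx A *m gmx B \in unitmx.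
Proof. by rewrite unitmx_mul !gmxP. Qed.
Lemma gl_inv_subproof (A : glz) : invmx (gmx A) \in unitmx.
Proof. by rewrite unitmx_inv gmxP. Qed.
Definition gl_one : glz := GLZ (unitmx1 int N).
Definition gl_mul (A B : glz) : glz := GLZ (gl_mul_subproof A B).
Definition gl_inv (A : glz) : glz := GLZ (gl_inv_subproof A).
Local Close Scope ring_scope.

Lemma gl_mulA : associative gl_mul.
Proof. by move=> A B C; apply: val_inj; rewrite /= mulmxA. Qed.
Lemma gl_mul1 : left_id gl_one gl_mul.
Proof. by move=> A; apply: val_inj; rewrite /= mul1mx. Qed.
Lemma gl_mulg1 : right_id gl_one gl_mul.
Proof. by move=> A; apply: val_inj; rewrite /= mulmx1. Qed.
Lemma gl_mulV : left_inverse gl_one gl_inv gl_mul.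
Proof. by move=> A; apply: val_inj; rewrite /= mulVmx // gmxP. Qed.
Lemma gl_mulgV : right_inverse gl_one gl_inv gl_mul.
Proof. by move=> A; apply: val_inj; rewrite /= mulmxV // gmxP. Qed.

HB.instance Definition _ := isGroup.Build glz gl_mulA gl_mul1 gl_mulg1 gl_mulV gl_mulgV.

Local Open Scope group_scope.

Lemma val_glmul (A B : glz) : val (A * B) = (val A *m val B)%R. Proof. by []. Qed.
Lemma val_gl1 : val (1 : glz) = (1%:M)%R. Proof. by []. Qed.

Definition Ug (x : int) i j : glz := insubd (1 : glz) (Um x i j).
Lemma valU x i j : i != j -> val (Ug x i j) = Um x i j.
Proof. by move=> H; rewrite /Ug insubdK // unfold_in /=; apply: Um_unit. Qed.

Lemma UgM x y i j : i != j -> Ug x i j * Ug y i j = Ug (x + y)%R i j.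
Proof. by move=> H; apply: val_inj; rewrite val_glmul !valU // Um_mul. Qed.
Lemma Ug0 i j : i != j -> Ug 0 i j = 1.
Proof. by move=> H; apply: val_inj; rewrite valU // Um0. Qed.
Lemma UgV x i j : i != j -> (Ug x i j)^-1 = Ug (- x)%R i j.
Proof.
move=> H; apply: (mulgI (Ug x i j)); rewrite mulgV UgM //.
by rewrite GRing.subrr Ug0.
Qed.

Lemma Ug_exp x i j (m : nat) : i != j -> Ug x i j ^+ m = Ug (x *+ m)%R i j.
Proof.
move=> H; elim: m => [|m IH]; first by rewrite expg0 GRing.mulr0n Ug0.
by rewrite expgS IH UgM // GRing.mulrS.
Qed.

Lemma Ug_zexp x i j (p : int) : i != j -> zexp (Ug x i j) p = Ug (p * x)%R i j.
Proof.
move=> H; case: p => m /=.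
  by rewrite Ug_exp // -natz GRing.mulr_natl.
rewrite Ug_exp // UgV //; congr Ug.
by rewrite NegzE -natz GRing.mulNr GRing.mulr_natl.
Qed.

Lemma Ug_commutator x y i k l : i != k -> k != l -> i != l ->
  Ug x i k * Ug y k l * (Ug x i k)^-1 * (Ug y k l)^-1 = Ug (x * y)%R i l.
Proof.
move=> Hik Hkl Hil.
have E : Ug x i k * Ug y k l = Ug (x * y)%R i l * Ug y k l * Ug x i k.
  by apply: val_inj; rewrite !val_glmul !valU // Um_comm.
by rewrite E mulgK mulgK.
Qed.

Lemma Pm_unit : Pm n \in unitmx. Proof. by case: (mulmx1_unit (PQ n)). Qed.
Lemma Qm_unit : Qm n \in unitmx. Proof. by case: (mulmx1_unit (PQ n)). Qed.
Definition Pg : glz := GLZ Pm_unit.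
Definition Qg : glz := GLZ Qm_unit.
Lemma PgV : Pg^-1 = Qg.
Proof. by apply: mulg1_eq; apply: val_inj; rewrite val_glmul /= PQ. Qed.

Lemma Pg_conj x i j : i != j -> Pg * Ug x i j * Pg^-1 = Ug x (ordS i) (ordS j).
Proof.
move=> H; have H' : ordS i != ordS j by rewrite (inj_eq (@ordS_inj N)).
by apply: val_inj; rewrite PgV !val_glmul !valU //= Pm_conj.
Qed.

Lemma Pg_conjX x i j (m : nat) : i != j ->
  Pg ^+ m * Ug x i j * Pg^-1 ^+ m = Ug x (iter m (@ordS N) i) (iter m (@ordS N) j).
Proof.
move=> H; elim: m => [|m IH]; first by rewrite !expg0 mul1g mulg1.
rewrite expgS expgSr -!mulgA (mulgA (Pg ^+ m)) (mulgA (Pg ^+ m * _)) IH.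
rewrite /= mulgA Pg_conj //.
elim: m {IH} => [|m IHm] //=.
by rewrite (inj_eq (@ordS_inj N)).
Qed.
End GL.


Section MatEval.
Local Open Scope group_scope.
Variable n : nat.
Notation N := n.+1.
Variables (al be : int).

Definition i0 : 'I_N := inord 0.

Lemma iter_ordS a m : a + m < N -> iter m (@ordS N) (inord a) = inord (a + m).
Proof.
elim: m => [|m IH] Hm /=; first by rewrite addn0.
rewrite IH; last by move: Hm; lia.
apply: val_inj; rewrite /= !inordK ?addnS //; last by move: Hm; lia.
  by rewrite modn_small //; move: Hm; lia.
by move: Hm; lia.
Qed.

Lemma inord_neq a b : a < N -> b < N -> a != b -> (inord a : 'I_N) != inord b.
Proof. by move=> Ha Hb; apply: contra => /eqP /(congr1 val); rewrite /= !inordK // => ->. Qed.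

Hypothesis Hn : 0 < n.
Lemma i01 : i0 != inord 1.
Proof. by apply: inord_neq. Qed.

Definition Phi (v : 'I_3) : glz n :=
  if val v == 1%N then Pg n else if val v == 0%N then Ug al i0 (inord 1) else Ug be i0 (inord 1).

Lemma Phi_comm x y : P3c x y -> commute (Phi x) (Phi y).
Proof.
rewrite /P3c /Phi => /orP[] /andP[/eqP -> /eqP ->] /=;
  by rewrite /commute !UgM ?i01 // GRing.addrC.
Qed.

Lemma geval_gw_mat k pq : k.+1 < N ->
  geval Phi (gw k pq) = Ug (pq.1 * al + pq.2 * be)%R (inord k) (inord k.+1).
Proof.
move=> Hk; rewrite geval_gw /Phi /= !Ug_zexp ?i01 // UgM ?i01 //.
rewrite Pg_conjX ?i01 // /i0 !iter_ordS //; last by move: Hk; lia.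
Qed.

Lemma nest_mat (L : seq (int * int)) acc k c : 0 < k -> k + size L < N ->
  geval Phi acc = Ug c i0 (inord k) ->
  geval Phi (nest acc k L) =
    Ug (c * \prod_(pq <- L) (pq.1 * al + pq.2 * be))%R i0 (inord (k + size L)).
Proof.
elim: L acc k c => [|pq L IH] acc k c Hk HkL Hacc /=.
  by rewrite big_nil GRing.mulr1 addn0.
rewrite big_cons GRing.mulrA addnS -addSn; apply: IH => //.
  by move: HkL => /=; lia.
rewrite geval_commw Hacc geval_gw_mat; last by move: HkL => /=; lia.
apply: Ug_commutator.
- by apply: inord_neq => //; move: HkL => /=; lia.
- by apply: inord_neq => //; move: HkL => /=; lia.
- by apply: inord_neq => //; move: HkL => /=; lia.
Qed.
End MatEval.


Lemma min_word (T : Type) (R : raag_word T -> Prop) w0 : R w0 ->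
  exists w, R w /\ forall w', R w' -> size w <= size w'.
Proof.
move: {2}(size w0) (leqnn (size w0)) => n; elim: n w0 => [|n IH] w0 Hn Hw0.
  exists w0; split => // w' _; move: Hn; rewrite leqn0 => /eqP ->; exact: leq0n.
case: (classic (exists w', R w' /\ size w' < size w0)) => [[w' [Hw' Hs]]|Hno].
  by apply: (IH w') => //; move: Hn Hs; lia.
exists w0; split => // w' Hw'; rewrite leqNgt; apply/negP => Hs; apply: Hno.
by exists w'.
Qed.

Lemma I3_cases (v : 'I_3) : v = va \/ v = vb \/ v = vc.
Proof.
case: v => [[|[|[|m]]] Hm]; [right; left|left|right; right|by []];
  by apply: val_inj.
Qed.

Lemma choose3 (X : Type) (P : 'I_3 -> X -> Prop) : (forall v, exists w, P v w) ->
  exists f : 'I_3 -> X, forall v, P v (f v).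
Proof.
move=> H; have [wa Ha] := H va; have [wb Hb] := H vb; have [wc Hc] := H vc.
exists (fun v => if val v == 1%N then wa else if val v == 0%N then wb else wc).
by move=> v; case: (I3_cases v) => [->|[->|->]].
Qed.

Lemma list_choice (A : eqType) (B : Type) (P : A -> B -> Prop) (xs : seq A) (b0 : B) :
  (forall x, x \in xs -> exists b, P x b) ->
  exists L : seq B, size L = size xs /\ forall x, x \in xs -> P x (nth b0 L (index x xs)).
Proof.
elim: xs => [|x xs IH] H; first by exists [::].
have [b Hb] := H x (mem_head x xs).
have [L [HL1 HL2]] : exists L : seq B, size L = size xs /\ forall y, y \in xs -> P y (nth b0 L (index y xs)).
  by apply: IH => y Hy; apply: H; rewrite inE Hy orbT.
exists (b :: L); split; first by rewrite /= HL1.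
move=> y Hy /=; case: (x =P y) => [<-|Hne] //=.
apply: HL2; move: Hy; rewrite inE => /orP[/eqP E|//]; by case: Hne.
Qed.

Lemma Ug_neq1 n (c : int) (i j : 'I_n.+1) : i != j -> (c != 0)%R -> Ug c i j != 1%g.
Proof.
move=> Hij Hc; apply/eqP => /(congr1 val); rewrite valU // val_gl1 /Um => /matrixP /(_ i j).
rewrite !mxE !eqxx (negbTE Hij) /= GRing.mulr1 GRing.add0r => E.
by move: Hc; rewrite E eqxx.
Qed.

Lemma hom_ext_letters (L T : Type) (S : pred T) (f : L -> raag_word T) w :
  (forall v, all (fun l => S l.1) (f v)) -> all (fun l => S l.1) (hom_ext f w).
Proof.
move=> H; elim: w => [|l w IH] //=; rewrite hom_ext_cons all_cat IH andbT.
by case: l.2 => //; rewrite /inv_word all_rev all_map; apply: H.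
Qed.

Lemma sum_abs_ge (L : seq (int * int)) pq : pq \in L ->
  (`|pq.2| <= \sum_(x <- L) `|x.2|)%N.
Proof.
elim: L => [|a L IH] //; rewrite inE big_cons => /orP[/eqP ->|H].
  exact: leq_addr.
by apply: leq_trans (IH H) _; apply: leq_addl.
Qed.

Lemma factor_neq0 (p q : int) (S : nat) : (`|q|%N <= S)%N -> (p, q) != (0%R, 0%R) ->
  (p * (1 + S)%:Z + q * 1 != 0)%R.
Proof.
move=> H1 H2. have : ~ (p = 0%R /\ q = 0%R) by move=> [E1 E2]; move: H2; rewrite E1 E2 eqxx.
move=> H3; apply/eqP => H4; apply: H3.
have [Hp|Hp] := eqVneq p 0%R.
  subst p; split => //; lia.
exfalso; have : (1 <= p)%R \/ (p <= -1)%R by lia.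
case=> Hp'; nia.
Qed.

Theorem lemma4p3 (T : finType) (e : rel T)
  (e_sym : symmetric e) (e_irr : irreflexive e)
  (f : 'I_3 -> raag_word T)
  (f_hom : is_raag_hom P3c e f)
  (f_inj : raag_hom_injective P3c e f) :
  exists iota : 'I_3 -> T,
    full_embedding P3c e iota /\ (forall a, in_hom_supp e f (iota a)).
Proof.
apply: NNPP => Hno.
have [f' Hf'] : exists f' : 'I_3 -> raag_word T, forall v,
    raag_eq e (f' v) (f v) /\ (forall w'', raag_eq e w'' (f v) -> size (f' v) <= size w'').
  apply: (@choose3 (raag_word T) (fun v w => raag_eq e w (f v) /\
     (forall w'', raag_eq e w'' (f v) -> size w <= size w''))) => v; apply: (@min_word _ (fun w => raag_eq e w (f v)) (f v)).
  exact: req_refl.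
pose S := fun x : T => [|| x \in map fst (f' va), x \in map fst (f' vb) | x \in map fst (f' vc)].
have Ssupp : forall x, S x -> in_hom_supp e f x.
  move=> x; rewrite /S => /or3P[] H; [exists va|exists vb|exists vc].
  - by exists (f' va); case: (Hf' va).
  - by exists (f' vb); case: (Hf' vb).
  - by exists (f' vc); case: (Hf' vc).
have Sall : forall v, all (fun l => S l.1) (f' v).
  move=> v; apply/allP => l Hl; have Hm : l.1 \in map fst (f' v) by apply: map_f.
  by rewrite /S; case: (I3_cases v) Hm => [->|[->|->]] ->; rewrite ?orbT.
have trans : forall x y z, S x -> S y -> S z -> ~~ e x y -> ~~ e y z -> ~~ e x z.
  move=> x y z Sx Sy Sz Hxy Hyz; apply/negP => Hxz; apply: Hno.
  have nxy : x != y by apply/eqP => E; move: Hyz; rewrite -E Hxz.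
  have nyz : y != z by apply/eqP => E; move: Hxy; rewrite E Hxz.
  have nxz : x != z by apply/eqP => E; move: Hxz; rewrite E e_irr.
  exists (fun v : 'I_3 => if val v == 0%N then x else if val v == 1%N then y else z).
  split; last first.
    by move=> a; apply: Ssupp; case: (I3_cases a) => [->|[->|->]].
  split.
    move=> a b; case: (I3_cases a) => [->|[->|->]]; case: (I3_cases b) => [->|[->|->]] //= E;
      by [move: nxy; rewrite E eqxx | move: nyz; rewrite E eqxx | move: nxz; rewrite E eqxx].
  move=> a b; case: (I3_cases a) => [->|[->|->]]; case: (I3_cases b) => [->|[->|->]];
    rewrite /P3c /=; first [ by rewrite e_irr | by rewrite (negbTE Hxy) | by rewrite (negbTE Hyz)
      | by rewrite Hxz | by rewrite e_sym (negbTE Hxy) | by rewrite e_sym (negbTE Hyz)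
      | by rewrite e_sym Hxz ].
pose xs := [seq x <- enum T | S x].
have Qna : forall x, S x -> forall y z, partx e S x y -> partx e S x z -> ~~ e y z.
  move=> x Sx y z /andP[Sy Hy] /andP[Sz Hz]; apply: (trans y x z Sy Sx Sz) => //.
  by rewrite e_sym.
have Hcomm : raag_eq e (f' vb ++ f' vc) (f' vc ++ f' vb).
  apply: req_trans (req_cat (Hf' vb).1 (Hf' vc).1) _.
  apply: req_trans (f_hom vb vc isT) _.
  by apply: req_cat; apply: req_sym; [exact (Hf' vc).1 | exact (Hf' vb).1].
have Hdep : forall x, x \in xs -> exists pq : int * int, pq != (0, 0)%R /\
    (zexp (phi (partx e S x) (f' vb)) pq.1 * zexp (phi (partx e S x) (f' vc)) pq.2 = 1)%g.
  move=> x; rewrite mem_filter => /andP[Sx _].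
  have C : commute (phi (partx e S x) (f' vb)) (phi (partx e S x) (f' vc)).
    rewrite /commute /phi -!MkM -!filter_cat; apply/Mk_eq.
    exact: (proj_req (Qna x Sx) Hcomm).
  have [p [q [Hpq E]]] := centralizer C.
  by exists (p, q).
have [Lpq [HL1 HL2]] := list_choice (0, 0)%R Hdep.
pose W := nest (gw 0 (1, 0)%R) 1 Lpq.
have Claim1 : raag_eq e (hom_ext f' W) [::].
  apply: (complete e_sym e_irr trans); first exact: hom_ext_letters.
  move=> x Sx; have Hx : x \in xs by rewrite mem_filter Sx mem_enum.
  have : phi (partx e S x) (hom_ext f' W) = 1%g.
    rewrite phi_geval geval_hom_ext.
    apply: nest_triv; right; exists (index x xs); first by rewrite HL1 index_mem.
    have [_ E] := HL2 x Hx.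
    by rewrite -!phi_geval.
  by move/(congr1 val).
have Claim2 : raag_eq P3c W [::].
  apply: f_inj; rewrite /=.
  apply: req_trans Claim1.
  by apply: req_hom_ext => // v; apply: req_sym; exact: (Hf' v).1.
pose al : int := (1 + \sum_(pq <- Lpq) `|pq.2|)%N%:Z.
have Hn : 0 < (size Lpq).+1 by [].
have E1 := geval_req (@Phi_comm (size Lpq).+1 al 1 Hn) Claim2.
have E2 : geval (Phi (size Lpq).+1 al 1) W =
    Ug (al * \prod_(pq <- Lpq) (pq.1 * al + pq.2 * 1))%R (i0 _) (inord (1 + size Lpq)).
  apply: nest_mat => //.
  rewrite geval_gw_mat //= GRing.mul1r GRing.mul0r GRing.addr0 //.
move: E1; rewrite E2 /=; apply/eqP; apply: Ug_neq1.
  by apply: inord_neq => //; rewrite add1n.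
apply: GRing.mulf_neq0; first by rewrite /al.
rewrite GRing.prodf_seq_neq0; apply/allP => pq Hpq /=.
have Hne : pq != (0, 0)%R.
  have Hi : index pq Lpq < size xs by rewrite -HL1 index_mem.
  have x0 : T by move: Hi; case: (xs) => [|x ?]; [by [] | move=> _; exact x].
  set i := index pq Lpq in Hi.
  have Hx : nth x0 xs i \in xs by apply: mem_nth.
  have [H _] := HL2 _ Hx.
  rewrite index_uniq // in H; last first.
    by rewrite /xs; apply: filter_uniq; apply: enum_uniq.
  by move: H; rewrite /i nth_index.
exact: factor_neq0 (sum_abs_ge Hpq) Hne.
Qed.
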